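(* Let $\|\cdot\|$ be a submultiplicative matrix norm on $\mathbb{C}^{m\times m}$, let $n\ge 2$, and let $$A=\begin{bmatrix} A_1 & B_1 & & & \\ C_1 & A_2 & B_2 & & \\ & \ddots & \ddots & \ddots & \\ & & C_{n-2} & A_{n-1} & B_{n-1}\\ & & & C_{n-1} & A_n\end{bmatrix},\qquad A_i,B_i,C_i\in\mathbb{C}^{m\times m},$$ be a block tridiagonal matrix such that $A$ is nonsingular, $B_i$ and $C_i$ are nonsingular for $i=1,\dots,n-1$, $A$ is row block diagonally dominant with respect to $\|\cdot\|$, and $$\|A_1^{-1}B_1\|<1\quad\text{and}\quad \|A_n^{-1}C_{n-1}\|<1.$$ Let $U_i,Y_i$ ($i=1,\dots,n$) be the matrices defined by the recurrences in the context. Then the sequence $\{\|U_i\|\}_{i=1}^n$ is strictly increasing and the sequence $\{\|Y_i\|\}_{i=1}^n$ is strictly decreasing.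
   Context: Row block diagonal dominance: a block matrix $A=[A_{ij}]$ with blocks $A_{ij}\in\mathbb{C}^{m\times m}$, $i,j=1,\dots,n$, is called row block diagonally dominant (with respect to $\|\cdot\|$) if all diagonal blocks $A_{ii}$ are nonsingular and $\sum_{j\ne i}\|A_{ii}^{-1}A_{ij}\|\le 1$ for $i=1,\dots,n$. For the block tridiagonal $A$ above (block $(i,i)$ is $A_i$, block $(i,i+1)$ is $B_i$, block $(i+1,i)$ is $C_i$), with the convention $C_0=B_n=0$, this means: every $A_i$ is nonsingular and $\|A_i^{-1}C_{i-1}\|+\|A_i^{-1}B_i\|\le 1$ for $i=1,\dots,n$. The matrices $U_i,V_i,X_i,Y_i$ are defined recursively by $U_1=I$, $U_2=-B_1^{-1}A_1U_1$, $U_i=-B_{i-1}^{-1}(C_{i-2}U_{i-2}+A_{i-1}U_{i-1})$ for $i=3,\dots,n$; $V_n=(A_nU_n+C_{n-1}U_{n-1})^{-1}$, $V_{n-1}=-V_nA_nB_{n-1}^{-1}$, $V_i=-(V_{i+1}A_{i+1}+V_{i+2}C_{i+1})B_i^{-1}$ for $i=n-2,\dots,1$; $X_1=I$, $X_2=-X_1A_1C_1^{-1}$, $X_i=-(X_{i-2}B_{i-2}+X_{i-1}A_{i-1})C_{i-1}^{-1}$ for $i=3,\dots,n$; $Y_n=(X_nA_n+X_{n-1}B_{n-1})^{-1}$, $Y_{n-1}=-C_{n-1}^{-1}A_nY_n$, $Y_i=-C_i^{-1}(A_{i+1}Y_{i+1}+B_{i+1}Y_{i+2})$ for $i=n-2,\dots,1$.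 (It is known, by a result of Ikebe, that when $A$ and all $B_i,C_i$ are nonsingular, the inverses appearing here exist, and $A^{-1}=[Z_{ij}]$ with $Z_{ij}=U_iV_j$ for $i\le j$ and $Z_{ij}=Y_iX_j$ for $i\ge j$.) *)

(* Defs.v *)
(* Complex numbers: an arbitrary numClosedFieldType C
   (covers the complex numbers; the result is stated for all such C). *)
From HB Require Import structures.
From mathcomp Require Import all_boot all_order all_algebra.
Set Implicit Arguments. Unset Strict Implicit. Unset Printing Implicit Defensive.
Import Order.TTheory GRing.Theory Num.Theory.
Local Open Scope ring_scope.

Section Defs.
Variables (C : numClosedFieldType) (m : nat).
Local Notation M := 'M[C]_m.

Definition submult_norm (N : M -> C) : Prop :=
  [/\ (forall X, 0 <= N X),
      (forall X, N X = 0 -> X = 0),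
      (forall (a : C) X, N (a *: X) = `|a| * N X),
      (forall X Y, N (X + Y) <= N X + N Y)
    & (forall X Y, N (X *m Y) <= N X * N Y)].

(* block matrices are given by families blk : nat -> nat -> M, 1-based indices *)
Definition blockmx (n : nat) (blk : nat -> nat -> M) :=
  \mxblock_(i < n, j < n) (blk i.+1 j.+1 : 'M[C]_((fun _ : 'I_n => m) i, (fun _ : 'I_n => m) j)).

Definition tridiag (A B Cm : nat -> M) (i j : nat) : M :=
  if i == j then A i
  else if j == i.+1 then B i
  else if i == j.+1 then Cm j
  else 0.

Definition row_block_dd (N : M -> C) (n : nat) (blk : nat -> nat -> M) : Prop :=
  forall i, (1 <= i <= n)%N ->
    blk i i \in unitmx /\
    \sum_(1 <= j < n.+1 | j != i) N (invmx (blk i i) *m blk i j) <= 1.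

(* Useq k = (U_{k+1}, U_{k+2}) *)
Fixpoint Useq (A B Cm : nat -> M) (k : nat) : M * M :=
  match k with
  | 0 => (1%:M, - (invmx (B 1%N) *m (A 1%N *m 1%:M)))
  | k'.+1 => let: (u, v) := Useq A B Cm k' in
      (v, - (invmx (B k'.+2) *m (Cm k'.+1 *m u + A k'.+2 *m v)))
  end.

Definition Umat (A B Cm : nat -> M) (i : nat) : M := (Useq A B Cm i.-1).1.

(* Xseq k = (X_{k+1}, X_{k+2}) *)
Fixpoint Xseq (A B Cm : nat -> M) (k : nat) : M * M :=
  match k with
  | 0 => (1%:M, - (1%:M *m A 1%N *m invmx (Cm 1%N)))
  | k'.+1 => let: (x, y) := Xseq A B Cm k' in
      (y, - ((x *m B k'.+1 + y *m A k'.+2) *m invmx (Cm k'.+2)))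
  end.

Definition Xmat (A B Cm : nat -> M) (i : nat) : M := (Xseq A B Cm i.-1).1.

(* Yseq n k = (Y_{n-k-1}, Y_{n-k}) *)
Fixpoint Yseq (A B Cm : nat -> M) (n k : nat) : M * M :=
  match k with
  | 0 => let yn := invmx (Xmat A B Cm n *m A n + Xmat A B Cm n.-1 *m B n.-1) in
         (- (invmx (Cm n.-1) *m A n *m yn), yn)
  | k'.+1 => let: (y1, y2) := Yseq A B Cm n k' in
      let i := (n - k'.+2)%N in
      (- (invmx (Cm i) *m (A i.+1 *m y1 + B i.+1 *m y2)), y1)
  end.

Definition Ymat (A B Cm : nat -> M) (n i : nat) : M := (Yseq A B Cm n (n - i)).2.

End Defs.

(* Main.v *)
Require Import Defs.
From HB Require Import structures.
From mathcomp Require Import all_boot all_order all_algebra.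
From mathcomp Require Import zify.
Import Order.TTheory GRing.Theory Num.Theory.
Local Open Scope ring_scope.

Lemma step_lt (R : numDomainType) (b c u0 u1 u2 : R) :
  0 <= b -> 0 < c -> b + c <= 1 -> 0 <= u0 -> u0 < u1 ->
  u1 <= b * u2 + c * u0 -> u1 < u2.
Proof.
move=> b0 c0 bc u00 u01 h.
have u10 : 0 <= u1 by apply: le_trans (ltW u01).
have h1 : u1 < b * u2 + c * u1.
  by apply: (le_lt_trans h); rewrite ltrD2l ltr_pM2l.
have h2 : b * u1 <= u1 - c * u1.
  rewrite -{2}(mul1r u1) -mulrBl ler_wpM2r //.
  by rewrite lerBrDr.
have h3 : b * u1 < b * u2.
  apply: (le_lt_trans h2); by rewrite ltrBlDr.
have bp : 0 < b.
  rewrite lt_def b0 andbT; apply/eqP => b0'.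
  by move: h3; rewrite b0' !mul0r ltxx.
by rewrite -(ltr_pM2l bp).
Qed.

Lemma one_neq0 (C : numClosedFieldType) (m : nat) :
  (0 < m)%N -> (1%:M : 'M[C]_m) != 0.
Proof.
case: m => // m' _; apply/eqP => /matrixP/(_ ord0 ord0).
by rewrite !mxE eqxx /= => /eqP; rewrite oner_eq0.
Qed.
Arguments one_neq0 {C m}.

Lemma unit_neq0 (C : numClosedFieldType) (m : nat) (X : 'M[C]_m) :
  (0 < m)%N -> X \in unitmx -> X != 0.
Proof.
move=> m0 hX; apply/eqP => X0; move: (mulmxV hX).
rewrite X0 mul0mx => /esym/eqP; by rewrite (negbTE (one_neq0 m0)).
Qed.

Section NormFacts.
Lemma norm0 (C : numClosedFieldType) (m : nat) (N : 'M[C]_m -> C) :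
  submult_norm N -> N 0 = 0.
Proof.
case=> _ _ hZ _ _. by rewrite -(scale0r (0 : 'M[C]_m)) hZ normr0 mul0r.
Qed.

Lemma normNeg (C : numClosedFieldType) (m : nat) (N : 'M[C]_m -> C) (X : 'M[C]_m) :
  submult_norm N -> N (- X) = N X.
Proof.
case=> _ _ hZ _ _. by rewrite -scaleN1r hZ normrN1 mul1r.
Qed.

Lemma norm_gt0 (C : numClosedFieldType) (m : nat) (N : 'M[C]_m -> C) (X : 'M[C]_m) :
  submult_norm N -> X != 0 -> 0 < N X.
Proof.
move=> hN; case: (hN) => h0 hd _ _ _ hX.
rewrite lt_def h0 andbT; apply/eqP => /hd /eqP; by rewrite (negbTE hX).
Qed.
End NormFacts.
Arguments norm0 {C m N}.
Arguments normNeg {C m N}.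
Arguments norm_gt0 {C m N X}.
Arguments unit_neq0 {C m X}.

Lemma base_lt (C : numClosedFieldType) (m : nat) (N : 'M[C]_m -> C) (P v w : 'M[C]_m) :
  submult_norm N -> N P < 1 -> w != 0 -> P *m v = - w -> N w < N v.
Proof.
move=> hN hP hw e.
have hw0 := norm_gt0 hN hw.
case: (hN) => h0 _ _ _ hM.
have h1 : N w <= N P * N v by rewrite -(normNeg _ hN) -e hM.
have hv : 0 < N v.
  rewrite lt_def h0 andbT; apply/eqP => v0; move: h1; rewrite v0 mulr0.
  by move=> /(lt_le_trans hw0); rewrite ltxx.
apply: (le_lt_trans h1); rewrite -{2}(mul1r (N v)) ltr_pM2r //.
Qed.

Arguments base_lt {C m N P v w}.

Lemma rec_le (C : numClosedFieldType) (m : nat) (N : 'M[C]_m -> C)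
   (Ai Bi Ci u0 u1 u2 : 'M[C]_m) :
  submult_norm N -> Ai \in unitmx -> Bi \in unitmx ->
  u2 = - (invmx Bi *m (Ci *m u0 + Ai *m u1)) ->
  N u1 <= N (invmx Ai *m Bi) * N u2 + N (invmx Ai *m Ci) * N u0.
Proof.
move=> hN hA hB e.
have e1 : u1 = - ((invmx Ai *m Bi) *m u2) + - ((invmx Ai *m Ci) *m u0).
  rewrite e mulmxN opprK -[invmx Ai *m Bi *m _]mulmxA mulKVmx // mulmxDr.
  by rewrite mulKmx // -mulmxA addrC addKr.
case: (hN) => _ _ _ hT hM.
rewrite {1}e1; apply: (le_trans (hT _ _)).
by rewrite !(normNeg _ hN) lerD ?hM.
Qed.

Lemma tri_diag (C : numClosedFieldType) (m : nat) (A B Cm : nat -> 'M[C]_m) i :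
  tridiag A B Cm i i = A i.
Proof. by rewrite /tridiag eqxx. Qed.

Lemma tri_sup (C : numClosedFieldType) (m : nat) (A B Cm : nat -> 'M[C]_m) i :
  tridiag A B Cm i i.+1 = B i.
Proof. rewrite /tridiag; have -> : (i == i.+1) = false by lia. by rewrite eqxx. Qed.

Lemma tri_sub (C : numClosedFieldType) (m : nat) (A B Cm : nat -> 'M[C]_m) i :
  tridiag A B Cm i.+1 i = Cm i.
Proof.
rewrite /tridiag; have -> : (i.+1 == i) = false by lia.
have -> : (i == i.+2) = false by lia. by rewrite eqxx. Qed.

Lemma tri0 (C : numClosedFieldType) (m : nat) (A B Cm : nat -> 'M[C]_m) i j :
  (i != j)%N -> (j != i.+1)%N -> (i != j.+1)%N -> tridiag A B Cm i j = 0.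
Proof. by move=> h1 h2 h3; rewrite /tridiag (negbTE h1) (negbTE h2) (negbTE h3). Qed.

Lemma dd_row (C : numClosedFieldType) (m n : nat) (N : 'M[C]_m -> C)
  (A B Cm : nat -> 'M[C]_m) i :
  submult_norm N -> row_block_dd N n (tridiag A B Cm) ->
  (1 <= i)%N -> (i.+2 <= n)%N ->
  N (invmx (A i.+1) *m Cm i) + N (invmx (A i.+1) *m B i.+1) <= 1.
Proof.
move=> hN hdd hi hin.
have [_ hs] := hdd i.+1 ltac:(lia).
apply: le_trans hs.
have hu : uniq (index_iota 1 n.+1) by rewrite /index_iota iota_uniq.
have hm : forall j, (1 <= j <= n)%N -> j \in index_iota 1 n.+1.
  by move=> j hj; rewrite mem_index_iota; lia.
case: (hN) => h0 _ _ _ _.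
rewrite big_mkcond (bigD1_seq i) ?hm //=; last by lia.
rewrite big_mkcond (bigD1_seq i.+2) ?hm //=.
have -> : (i != i.+1) = true by lia.
have -> : (i.+2 != i) = true by lia.
have -> : (i.+2 != i.+1) = true by lia.
rewrite !tri_diag tri_sub tri_sup addrA lerDl.
apply: sumr_ge0 => j _; case: ifP => // _; case: ifP => // _.
Qed.

Lemma sum_support (V : zmodType) (G : nat -> V) n s :
  uniq s -> all (fun i => (i < n)%N) s ->
  (forall i, (i < n)%N -> i \notin s -> G i = 0) ->
  \sum_(0 <= i < n) G i = \sum_(i <- s) G i.
Proof.
move=> us alls h0.
rewrite (bigID (fun i => i \in s)) /= [X in _ + X]big1_seq ?addr0; last first.
  move=> i /andP[hi]; rewrite mem_index_iota => hin; apply: h0 => //; lia.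
rewrite -big_filter; apply: perm_big; apply: uniq_perm.
- by rewrite filter_uniq // iota_uniq.
- exact: us.
move=> x; rewrite mem_filter mem_index_iota; apply/andP/idP => [[]//|hx].
by split=> //; move/allP: alls => /(_ x hx).
Qed.

Lemma Xmat_rec (C : numClosedFieldType) (m : nat) (A B Cm : nat -> 'M[C]_m) k :
  Xmat A B Cm k.+3 =
  - ((Xmat A B Cm k.+1 *m B k.+1 + Xmat A B Cm k.+2 *m A k.+2) *m invmx (Cm k.+2)).
Proof. rewrite /Xmat /=; by case: (Xseq A B Cm k). Qed.

Lemma Xlast_neq0 (C : numClosedFieldType) (m n : nat) (A B Cm : nat -> 'M[C]_m) :
  (0 < m)%N -> (2 <= n)%N ->
  blockmx n (tridiag A B Cm) \in unitmx ->
  (forall i, (1 <= i < n)%N -> Cm i \in unitmx) ->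
  Xmat A B Cm n *m A n + Xmat A B Cm n.-1 *m B n.-1 != 0.
Proof.
move=> m0 n2 hU hC; apply/eqP => hlast.
pose W := \mxrow_(i < n) (Xmat A B Cm i.+1 : 'M[C]_(m, (fun _ : 'I_n => m) i)).
have hW : W *m blockmx n (tridiag A B Cm) = 0.
  rewrite /W /blockmx mul_mxrow_mxblock.
  rewrite -(mxrow0 (q_ := fun _ : 'I_n => m)); apply: eq_mxrow => j.
  rewrite -(big_mkord xpredT (fun i => Xmat A B Cm i.+1 *m tridiag A B Cm i.+1 j.+1)).
  case: j => j hj /=.
  case: j hj => [|j] hj.
    rewrite (@sum_support _ _ n [:: 0; 1]%N); [|by []|by rewrite /= andbT; lia|by move=> i hi hs; rewrite tri0 ?mulmx0 //; move: hs; rewrite !inE; lia].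
    rewrite !big_cons big_nil addr0 tri_diag tri_sub /Xmat /=.
    by rewrite mulNmx mulmxKV ?hC // addrN.
  case: (ltnP j.+2 n) => hjn.
    rewrite (@sum_support _ _ n [:: j; j.+1; j.+2]%N); [|by rewrite /= !inE; lia|by rewrite /= andbT; lia|by move=> i hi hs; rewrite tri0 ?mulmx0 //; move: hs; rewrite !inE; lia].
    rewrite !big_cons big_nil addr0 tri_diag tri_sub tri_sup Xmat_rec.
    by rewrite mulNmx mulmxKV ?addrA ?addrN //; apply: hC; lia.
  have en : n = j.+2 by lia.
  subst n.
  rewrite (@sum_support _ _ j.+2 [:: j; j.+1]%N); [|by rewrite /= !inE; lia|by rewrite /= andbT; lia|by move=> i hi hs; rewrite tri0 ?mulmx0 //; move: hs; rewrite !inE; lia].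
  by rewrite !big_cons big_nil addr0 tri_diag tri_sup addrC.
have W0 : W = 0 by rewrite -(mulmxK hU W) hW mul0mx.
have n0 : (0 < n)%N by lia.
move: (mxrowK (fun i : 'I_n => (Xmat A B Cm i.+1 : 'M[C]_(m, (fun _ : 'I_n => m) i))) (Ordinal n0)).
rewrite -/W W0 submxrow0 /= => /esym/eqP.
by rewrite /Xmat /= (negbTE (one_neq0 m0)).
Qed.

Lemma U_incr (C : numClosedFieldType) (m n : nat) (N : 'M[C]_m -> C)
  (A B Cm : nat -> 'M[C]_m) :
  (0 < m)%N -> submult_norm N -> (2 <= n)%N ->
  (forall i, (1 <= i < n)%N -> B i \in unitmx /\ Cm i \in unitmx) ->
  row_block_dd N n (tridiag A B Cm) ->
  N (invmx (A 1%N) *m B 1%N) < 1 ->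
  forall k, (k.+2 <= n)%N -> N (Useq A B Cm k).1 < N (Useq A B Cm k).2.
Proof.
move=> m0 hN n2 hBC hdd h1.
have hA : forall i, (1 <= i <= n)%N -> A i \in unitmx.
  by move=> i hi; have [+ _] := hdd i hi; rewrite tri_diag.
case: (hN) => h0 _ _ _ _.
elim=> [|k IH] hk.
  rewrite /=; apply: (base_lt hN h1 (one_neq0 m0)).
  have hB1 := (hBC 1%N ltac:(lia)).1.
  by rewrite mulmxN -!mulmxA mulKVmx // mulKmx ?mulmx1 // hA //; lia.
have := IH ltac:(lia); rewrite /=; case: (Useq A B Cm k) => u v /= huv.
have hAk := hA k.+2 ltac:(lia).
have [hBk _] := hBC k.+2 ltac:(lia).
have [_ hCk] := hBC k.+1 ltac:(lia).
apply: (@step_lt _ (N (invmx (A k.+2) *m B k.+2))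
                (N (invmx (A k.+2) *m Cm k.+1)) (N u)) => //.
- apply: norm_gt0 => //; apply: unit_neq0 => //; by rewrite unitmx_mul unitmx_inv hAk.
- by rewrite addrC; apply: (@dd_row _ _ n N A B Cm k.+1) => //; lia.
- exact: rec_le.
Qed.

Lemma Y_decr (C : numClosedFieldType) (m n : nat) (N : 'M[C]_m -> C)
  (A B Cm : nat -> 'M[C]_m) :
  (0 < m)%N -> submult_norm N -> (2 <= n)%N ->
  blockmx n (tridiag A B Cm) \in unitmx ->
  (forall i, (1 <= i < n)%N -> B i \in unitmx /\ Cm i \in unitmx) ->
  row_block_dd N n (tridiag A B Cm) ->
  N (invmx (A n) *m Cm n.-1) < 1 ->
  forall k, (k.+2 <= n)%N -> N (Yseq A B Cm n k).2 < N (Yseq A B Cm n k).1.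
Proof.
move=> m0 hN n2 hU hBC hdd h1.
have hA : forall i, (1 <= i <= n)%N -> A i \in unitmx.
  by move=> i hi; have [+ _] := hdd i hi; rewrite tri_diag.
case: (hN) => h0 _ _ _ _.
elim=> [|k IH] hk.
  rewrite /=.
  set M := (_ + _).
  have hM : M != 0 by apply: Xlast_neq0 => // i hi; exact: (hBC i hi).2.
  have hyn : invmx M != 0.
    case hMu : (M \in unitmx).
      by apply: unit_neq0 => //; rewrite unitmx_inv.
    by rewrite invmx_out // inE hMu.
  apply: (base_lt hN h1 hyn).
  have [_ hCn] := hBC n.-1 ltac:(lia).
  by rewrite mulmxN -!mulmxA mulKVmx // mulKmx // hA //; lia.
have := IH ltac:(lia); rewrite /=; case: (Yseq A B Cm n k) => y1 y2 /= hy.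
set i := (n - k.+2)%N.
have hi1 : (1 <= i)%N by rewrite /i; lia.
have hi2 : (i.+2 <= n)%N by rewrite /i; lia.
have hAk := hA i.+1 ltac:(lia).
have [hBk _] := hBC i.+1 ltac:(lia).
have [_ hCk] := hBC i ltac:(lia).
apply: (@step_lt _ (N (invmx (A i.+1) *m Cm i))
                (N (invmx (A i.+1) *m B i.+1)) (N y2)) => //.
- apply: norm_gt0 => //; apply: unit_neq0 => //; by rewrite unitmx_mul unitmx_inv hAk.
- exact: (@dd_row _ _ n N A B Cm i hN hdd hi1 hi2).
- apply: (@rec_le _ _ N (A i.+1) (Cm i) (B i.+1)) => //; by rewrite addrC.
Qed.

Theorem lemma2p3 (C : numClosedFieldType) (m n : nat) (N : 'M[C]_m -> C)
  (A B Cm : nat -> 'M[C]_m) :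
  (0 < m)%N ->
  submult_norm N ->
  (2 <= n)%N ->
  blockmx n (tridiag A B Cm) \in unitmx ->
  (forall i, (1 <= i < n)%N -> B i \in unitmx /\ Cm i \in unitmx) ->
  row_block_dd N n (tridiag A B Cm) ->
  N (invmx (A 1%N) *m B 1%N) < 1 ->
  N (invmx (A n) *m Cm n.-1) < 1 ->
  (forall i, (1 <= i < n)%N -> N (Umat A B Cm i) < N (Umat A B Cm i.+1)) /\
  (forall i, (1 <= i < n)%N -> N (Ymat A B Cm n i.+1) < N (Ymat A B Cm n i)).
Proof.
move=> m0 hN n2 hU hBC hdd h1 hn; split.
  case=> [|j] // hj; rewrite /Umat /=.
  have := @U_incr _ _ n N A B Cm m0 hN n2 hBC hdd h1 j ltac:(lia).
  by case: (Useq A B Cm j).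
move=> i hi; rewrite /Ymat.
have -> : (n - i = (n - i.+1).+1)%N by lia.
have := @Y_decr _ _ n N A B Cm m0 hN n2 hU hBC hdd hn (n - i.+1)%N ltac:(lia).
by rewrite /=; case: (Yseq A B Cm n (n - i.+1)).
Qed.
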